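(* Let $K$ be a convex body in $\mathbb{R}^d$, $G\subset\operatorname{int}(K)$ a convex body, $0<\alpha\le1$, and $G_+:=\{y\in\operatorname{int}(K):\inf_{g\in G}d_K(y,g)\le\alpha\}$. Then for every $x\in\partial G$ there exists $y\in\partial G_+$ with $d_K(x,y)=\alpha$. In particular, $\partial G\subseteq\{z:\inf_{w\in\partial G_+}d_K(z,w)\le\alpha\}$.
   Context: Hilbert distance: for distinct $x,y\in\operatorname{int}(K)$, with $y'$ (resp. $x'$) where the ray from $x$ through $y$ (resp. $y$ through $x$) meets $\partial K$, $d_K(x,y)=\frac12\ln\left(\frac{\|y-x'\|}{\|x-x'\|}\frac{\|x-y'\|}{\|y-y'\|}\right)$, $d_K(x,x)=0$. *)

(* Defs.v *)
From mathcomp Require Import all_boot all_order all_algebra.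
From mathcomp Require Import all_classical all_reals all_analysis.
Set Implicit Arguments. Unset Strict Implicit. Unset Printing Implicit Defensive.
Import Order.TTheory GRing.Theory Num.Theory.
Import numFieldNormedType.Exports.
Local Open Scope classical_set_scope.
Local Open Scope ring_scope.

Definition enorm (R : realType) (d : nat) (v : 'rV[R]_d) : R :=
  Num.sqrt (\sum_(i < d) (v ord0 i) ^+ 2).

Definition convex_set_rV (R : realType) (d : nat) (K : set 'rV[R]_d) : Prop :=
  forall x y (t : R), K x -> K y -> 0 <= t -> t <= 1 -> K (t *: x + (1 - t) *: y).

Definition convex_body (R : realType) (d : nat) (K : set 'rV[R]_d) : Prop :=
  [/\ compact K, convex_set_rV K & interior K !=set0].

Definition bd (R : realType) (d : nat) (A : set 'rV[R]_d) : set 'rV[R]_d :=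
  closure A `\` interior A.

Definition ray_exit (R : realType) (d : nat) (K : set 'rV[R]_d) (x y : 'rV[R]_d)
  : 'rV[R]_d :=
  xget 0 [set p | bd K p /\ exists t : R, 0 <= t /\ p = x + t *: (y - x)].

Definition hilbert_dist (R : realType) (d : nat) (K : set 'rV[R]_d) (x y : 'rV[R]_d)
  : R :=
  if x == y then 0 else
  let x' := ray_exit K y x in
  let y' := ray_exit K x y in
  ln ((enorm (y - x') / enorm (x - x')) * (enorm (x - y') / enorm (y - y'))) / 2.

Definition Gplus (R : realType) (d : nat) (K G : set 'rV[R]_d) (alpha : R)
  : set 'rV[R]_d :=
  [set y | interior K y /\ inf [set hilbert_dist K y g | g in G] <= alpha].

(* Main.v *)
Require Import Defs.
From mathcomp Require Import all_boot all_order all_algebra.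
From mathcomp Require Import all_classical all_reals all_analysis.
From mathcomp Require Import lra ring.
Import Order.TTheory GRing.Theory Num.Theory.
Import numFieldNormedType.Exports.
Local Open Scope classical_set_scope.
Local Open Scope ring_scope.
Set Implicit Arguments. Unset Strict Implicit. Unset Printing Implicit Defensive.

Definition dot (R : realType) n (u v : 'rV[R]_n) : R := \sum_i u ord0 i * v ord0 i.

Section A.
Context {R : realType} {n : nat}.
Implicit Types u v w : 'rV[R]_n.

Lemma dotC u v : dot u v = dot v u.
Proof. by apply: eq_bigr => i _; rewrite mulrC. Qed.
Lemma dotDl u v w : dot (u + v) w = dot u w + dot v w.
Proof. by rewrite /dot -big_split; apply: eq_bigr => i _; rewrite !mxE mulrDl. Qed.
Lemma dotDr u v w : dot w (u + v) = dot w u + dot w v.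
Proof. by rewrite dotC dotDl !(dotC w). Qed.
Lemma dotZl (a : R) u v : dot (a *: u) v = a * dot u v.
Proof. by rewrite /dot mulr_sumr; apply: eq_bigr => i _; rewrite !mxE mulrA. Qed.
Lemma dotZr (a : R) u v : dot v (a *: u) = a * dot v u.
Proof. by rewrite dotC dotZl dotC. Qed.
Lemma dotNl u v : dot (- u) v = - dot u v.
Proof. by rewrite -scaleN1r dotZl mulN1r. Qed.
Lemma dotNr u v : dot v (- u) = - dot v u.
Proof. by rewrite dotC dotNl dotC. Qed.
Lemma dotBl u v w : dot (u - v) w = dot u w - dot v w.
Proof. by rewrite dotDl dotNl. Qed.
Lemma dotBr u v w : dot w (u - v) = dot w u - dot w v.
Proof. by rewrite dotDr dotNr. Qed.
Lemma dot0l v : dot 0 v = 0.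
Proof. by rewrite /dot big1 // => i _; rewrite mxE mul0r. Qed.
Lemma dot0r v : dot v 0 = 0.
Proof. by rewrite dotC dot0l. Qed.
Lemma dot_ge0 v : 0 <= dot v v.
Proof. by apply: sumr_ge0 => i _; rewrite -expr2 sqr_ge0. Qed.
Lemma dot_eq0 v : dot v v = 0 -> v = 0.
Proof.
move=> /eqP; rewrite psumr_eq0; last by move=> i _; rewrite -expr2 sqr_ge0.
move=> /allP H; apply/rowP => i; rewrite mxE.
have /H : i \in index_enum 'I_n by rewrite mem_index_enum.
by rewrite /= mulf_eq0 orbb => /eqP.
Qed.
Lemma dot_gt0 v : v != 0 -> 0 < dot v v.
Proof. by move=> v0; rewrite lt_def dot_ge0 andbT; apply: contra v0 => /eqP/dot_eq0 ->. Qed.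

Lemma enormE v : enorm v = Num.sqrt (dot v v).
Proof. by rewrite /enorm /dot; congr Num.sqrt. Qed.
Lemma enormZ (a : R) v : enorm (a *: v) = `|a| * enorm v.
Proof.
rewrite !enormE dotZl dotZr mulrA sqrtrM; last by rewrite -expr2 sqr_ge0.
by rewrite -expr2 sqrtr_sqr.
Qed.
Lemma enorm_gt0 v : v != 0 -> 0 < enorm v.
Proof. by move=> v0; rewrite enormE sqrtr_gt0 dot_gt0. Qed.
Lemma enormN v : enorm (- v) = enorm v.
Proof. by rewrite -scaleN1r enormZ normrN1 mul1r. Qed.
Lemma enormB u v : enorm (u - v) = enorm (v - u).
Proof. by rewrite -enormN opprB. Qed.

Lemma coord_le_norm v i : `|v ord0 i| <= `|v|.
Proof.
rewrite [leRHS]/Num.Def.normr /= mx_normrE; apply/bigmax_geP; right => /=.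
by exists (ord0, i).
Qed.

Lemma dot_le u v : `|dot u v| <= n%:R * (`|u| * `|v|).
Proof.
rewrite /dot; apply: le_trans (ler_norm_sum _ _ _) _.
rewrite -[n in n%:R]card_ord -sum1_card natr_sum mulr_suml.
apply: ler_sum => i _; rewrite mul1r normrM.
by apply: ler_pM => //; apply: coord_le_norm.
Qed.

Lemma dot_continuous w : continuous (fun v : 'rV[R]_n => dot v w).
Proof.
rewrite /dot.
suff H : forall s : seq 'I_n,
  continuous (fun v : 'rV[R]_n => \sum_(i <- s) v ord0 i * w ord0 i) by exact: H.
elim=> [|i s IH] v.
  under eq_fun do rewrite big_nil. exact: cst_continuous.
under eq_fun do rewrite big_cons.
apply: (@continuousD _ _ _ (fun v : 'rV[R]_n => v ord0 i * w ord0 i)); last exact: IH.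
apply: (@continuousM _ _ (fun v : 'rV[R]_n => v ord0 i) (fun=> w ord0 i)).
  exact: coord_continuous.
exact: cst_continuous.
Qed.

End A.

Section B.
Context {R : realType} {n : nat}.
Implicit Types (K : set 'rV[R]_n) (a b x y : 'rV[R]_n).

Lemma interiorP K x :
  interior K x <-> exists2 r : R, 0 < r & forall y, `|y - x| < r -> K y.
Proof.
rewrite /interior; split.
  move=> /nbhs_ballP [r /= r0 H]; exists r => // y yr; apply: H.
  by rewrite -ball_normE /= -normrN opprB.
move=> [r r0 H]; apply/nbhs_ballP; exists r => // y.
by rewrite -ball_normE /= => yr; apply: H; rewrite -normrN opprB.
Qed.

Lemma compact_normB K : compact K -> exists M : R, forall x, K x -> `|x| <= M.
Proof.
move=> /compact_bounded [M [Mr HM]]; exists (M + 1) => x Kx.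
by apply: (HM (M + 1)); rewrite // ltrDl.
Qed.

Lemma normB_bounded K (M : R) : (forall x, K x -> `|x| <= M) -> bounded_set K.
Proof.
move=> HM; exists M; split; first exact: num_real.
by move=> y My x Kx; apply: le_trans (HM x Kx) (ltW My).
Qed.

Lemma compact_closedK K : compact K -> closed K.
Proof. by move=> cK; apply: compact_closed => //; exact: norm_hausdorff. Qed.

Lemma bd_closedE K p : closed K -> bd K p <-> (K p /\ ~ interior K p).
Proof. by move=> cK; rewrite /bd -(proj1 (closure_id K) cK). Qed.

Lemma interior_convex K a b (t : R) : convex_set_rV K ->
  interior K a -> K b -> 0 < t -> t <= 1 -> interior K (t *: a + (1 - t) *: b).
Proof.
move=> cK /interiorP [r r0 Hr] Kb t0 t1; apply/interiorP.
exists (t * r); first by rewrite mulr_gt0.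
move=> y yr.
pose a' := t^-1 *: (y - (1 - t) *: b).
have -> : y = t *: a' + (1 - t) *: b.
  by rewrite /a' scalerA mulfV ?gt_eqF // scale1r subrK.
apply: cK; [|exact: Kb|exact: ltW|exact: t1].
  apply: Hr; rewrite /a'.
  have -> : t^-1 *: (y - (1 - t) *: b) - a = t^-1 *: (y - (t *: a + (1 - t) *: b)).
    rewrite [in RHS]opprD [in RHS]addrCA [in RHS]scalerDr [in RHS]scalerN [in RHS]scalerA.
    by rewrite mulVf ?gt_eqF // scale1r [RHS]addrC.
  by rewrite normrZ ger0_norm ?invr_ge0 ?ltW // ltr_pdivrMl.
Qed.

Lemma interior_convex2 K a b (s : R) : convex_set_rV K ->
  interior K a -> K b -> 0 <= s -> s < 1 -> interior K (a + s *: (b - a)).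
Proof.
move=> cK ia Kb s0 s1.
have -> : a + s *: (b - a) = (1 - s) *: a + (1 - (1 - s)) *: b.
  by apply/rowP => i; rewrite !mxE; ring.
apply: interior_convex => //; rewrite ?subr_gt0 //.
by rewrite lerBlDr lerDl.
Qed.

Lemma ray_bd_uniq K a v (t1 t2 : R) : convex_set_rV K -> interior K a ->
  0 <= t1 -> 0 <= t2 -> K (a + t1 *: v) -> K (a + t2 *: v) ->
  ~ interior K (a + t1 *: v) -> ~ interior K (a + t2 *: v) ->
  a + t1 *: v = a + t2 *: v.
Proof.
move=> cK ia.
wlog: t1 t2 / t1 <= t2.
  move=> W t10 t20 K1 K2 n1 n2; have [le12|lt21] := leP t1 t2; first exact: W.
  by apply/esym/W => //; apply/ltW.
move=> le12 t10 t20 K1 K2 n1 n2.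
have [->//|lt12] := eqVneq t1 t2.
have {lt12} lt12 : t1 < t2 by rewrite lt_neqAle lt12.
exfalso; apply: n1.
have t2p : 0 < t2 by apply: le_lt_trans lt12.
have -> : a + t1 *: v = a + (t1 / t2) *: ((a + t2 *: v) - a).
  by rewrite (addrC a (t2 *: v)) addrK scalerA mulfVK ?gt_eqF.
apply: interior_convex2 => //; first by rewrite divr_ge0.
by rewrite ltr_pdivrMr // mul1r.
Qed.

Lemma ray_exitE K a b p (t : R) : compact K -> convex_set_rV K -> interior K a ->
  0 <= t -> p = a + t *: (b - a) -> K p -> ~ interior K p ->
  ray_exit K a b = p.
Proof.
move=> cpK cK ia t0 pE Kp np.
have clK := compact_closedK cpK.
rewrite /ray_exit; apply: xget_unique.
  by split; [apply/bd_closedE | exists t].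
move=> q [/(bd_closedE _ clK) [Kq nq] [s [s0 qE]]].
rewrite qE pE; apply: (@ray_bd_uniq K a (b - a) s t) => //; by rewrite -?qE -?pE.
Qed.

End B.

Section C.
Context {R : realType} {n : nat}.
Implicit Types (K : set 'rV[R]_n) (a b x y : 'rV[R]_n).

Lemma ray_exit_ex K a b : compact K -> convex_set_rV K -> interior K a ->
  interior K b -> a != b ->
  exists2 t : R, 1 < t & K (a + t *: (b - a)) /\ ray_exit K a b = a + t *: (b - a).
Proof.
move=> cpK cK ia ib ab.
have clK := compact_closedK cpK.
set v := b - a.
have v0 : v != 0 by rewrite subr_eq0 eq_sym.
have nv : 0 < `|v| by rewrite normr_gt0.
have [M HM] := compact_normB cpK.
pose T := [set t : R | 0 <= t /\ K (a + t *: v)].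
have T1 : T 1 by split => //; rewrite scale1r /v addrC subrK; exact: interior_subset.
have hsT : has_sup T.
  split; first by exists 1.
  exists ((M + `|a|) / `|v|) => t [t0 Kt].
  rewrite ler_pdivlMr //.
  have -> : t * `|v| = `|(a + t *: v) - a|.
    by rewrite (addrC a) addrK normrZ ger0_norm.
  apply: le_trans (ler_normB _ _) _.
  by rewrite lerD2r; apply: HM.
set t0 := sup T.
have t0ub : forall t, T t -> t <= t0 by move=> t; apply: sup_upper_bound.
have t01 : 1 <= t0 by apply: t0ub.
have Kp0 : K (a + t0 *: v).
  rewrite (proj1 (closure_id K) clK) => B /nbhs_ballP [e /= e0 He].
  have [t Tt tlt] := sup_adherent (divr_gt0 e0 nv) hsT.
  exists (a + t *: v); split; first by case: Tt.
  apply: He; rewrite -ball_normE /=.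
  rewrite opprD addrACA subrr add0r -scalerBl normrZ.
  rewrite ger0_norm ?subr_ge0 ?t0ub //.
  by rewrite -ltr_pdivlMr // ltrBlDr addrC -ltrBlDr.
have np0 : ~ interior K (a + t0 *: v).
  move=> /interiorP [r r0 Hr].
  have d0 : 0 < r / (2 * `|v|) by rewrite divr_gt0 // mulr_gt0.
  have : T (t0 + r / (2 * `|v|)).
    split; first by apply: addr_ge0; apply: ltW => //; exact: (lt_le_trans ltr01 t01).
    apply: Hr; rewrite scalerDl addrA (addrC (a + t0 *: v)) addrK normrZ ger0_norm ?ltW //.
    have -> : r / (2 * `|v|) * `|v| = r / 2 by field; rewrite gt_eqF.
    lra.
  move=> /t0ub; rewrite gerDl => /(lt_le_trans d0); by rewrite ltxx.
exists t0; last split => //.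
  rewrite lt_neqAle t01 andbT; apply/eqP => t0E; apply: np0.
  by rewrite -t0E scale1r /v addrC subrK.
apply: (ray_exitE (t := t0)) => //; exact: le_trans t01.
Qed.

End C.

Definition aff (R : realType) n (a : 'rV[R]_n) (c : R) (k : 'rV[R]_n) : R := dot a k + c.

Section D.
Context {R : realType} {n : nat}.
Implicit Types (K : set 'rV[R]_n) (a b x y z g : 'rV[R]_n).

Lemma aff_line a c p v (t : R) : aff a c (p + t *: v) = aff a c p + t * dot a v.
Proof. by rewrite /aff dotDr dotZr addrAC. Qed.

Lemma ler_divdiv (p q a b : R) : 0 < q -> 0 < b -> p * b <= a * q -> p / q <= a / b.
Proof. by move=> q0 b0 H; rewrite ler_pdivrMr // mulrAC ler_pdivlMr. Qed.

Lemma hilbert_dist_sym K x y : hilbert_dist K x y = hilbert_dist K y x.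
Proof.
rewrite /hilbert_dist; case E1: (x == y); case E2: (y == x).
- reflexivity.
- exfalso; move/eqP: E1 => E1; move/negbT/eqP: E2 => E2; exact: E2 (esym E1).
- exfalso; move/eqP: E2 => E2; move/negbT/eqP: E1 => E1; exact: E1 (esym E2).
- exact: (congr1 (fun t => ln t / 2) (mulrC _ _)).
Qed.

Lemma hilbert_distE K x y : x != y -> hilbert_dist K x y =
  ln ((enorm (y - ray_exit K y x) / enorm (x - ray_exit K y x)) *
      (enorm (x - ray_exit K x y) / enorm (y - ray_exit K x y))) / 2.
Proof.
move=> xy; rewrite /hilbert_dist; case E: (x == y).
- exfalso; move/eqP: E => E; move/eqP: xy => xy; exact: xy E.
- reflexivity.
Qed.

Lemma hilbert_dist0 K x : hilbert_dist K x x = 0.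
Proof.
rewrite /hilbert_dist; case E: (x == x).
- reflexivity.
- exfalso; move/negbT/eqP: E => E; exact: E.
Qed.

Lemma ln_half_mono (u v : R) : 0 < u -> u <= v -> ln u / 2 <= ln v / 2.
Proof.
move=> u0 uv; rewrite ler_pM2r // ler_ln ?posrE //; exact: lt_le_trans uv.
Qed.

Lemma hilbert_lb K a1 c1 a2 c2 z g : compact K -> convex_set_rV K ->
  interior K z -> interior K g ->
  (forall k, K k -> 0 <= aff a1 c1 k) -> (forall k, K k -> 0 <= aff a2 c2 k) ->
  0 < aff a1 c1 z -> 0 < aff a1 c1 g -> 0 < aff a2 c2 z -> 0 < aff a2 c2 g ->
  ln ((aff a1 c1 z * aff a2 c2 g) / (aff a1 c1 g * aff a2 c2 z)) / 2
    <= hilbert_dist K z g.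
Proof.
move=> cpK cK iz ig H1 H2 p1z p1g p2z p2g.
have [zg|zg] := eqVneq z g.
  rewrite -zg hilbert_dist0.
  have -> : aff a1 c1 z * aff a2 c2 z / (aff a1 c1 z * aff a2 c2 z) = 1.
    by rewrite divff // mulf_neq0 // gt_eqF.
  by rewrite ln1 mul0r.
rewrite hilbert_distE //.
have gz : g != z by rewrite eq_sym.
have [t1 t11 [Kz' E]] := ray_exit_ex cpK cK ig iz gz.
rewrite E; clear E.
have [t2 t21 [Kg' E]] := ray_exit_ex cpK cK iz ig zg.
rewrite E; clear E.
apply: ln_half_mono.
  by rewrite divr_gt0 // mulr_gt0.
set w := z - g.
have w0 : w != 0 by rewrite subr_eq0.
have e0 := enorm_gt0 w0.
have E1 : g - (g + t1 *: w) = (- t1) *: w.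
  by apply/rowP => i; rewrite !mxE; ring.
have E2 : z - (g + t1 *: w) = (1 - t1) *: w.
  by apply/rowP => i; rewrite !mxE; ring.
have E3 : z - (z + t2 *: (g - z)) = t2 *: w.
  by apply/rowP => i; rewrite !mxE; ring.
have E4 : g - (z + t2 *: (g - z)) = (t2 - 1) *: w.
  by apply/rowP => i; rewrite !mxE; ring.
rewrite E1 E2 E3 E4 !enormZ normrN.
have t1p : 0 < t1 by apply: lt_trans t11.
have t2p : 0 < t2 by apply: lt_trans t21.
rewrite (ger0_norm (ltW t1p)) (ger0_norm (ltW t2p)) (ltr0_norm (_ : 1 - t1 < 0)); last first.
  by rewrite subr_lt0.
rewrite ger0_norm; last by rewrite subr_ge0 ltW.
have Ht : t1 * enorm w / (- (1 - t1) * enorm w) * (t2 * enorm w / ((t2 - 1) * enorm w))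
   = (t1 / (t1 - 1)) * (t2 / (t2 - 1)).
  by field; apply/and4P; split; rewrite ?subr_eq0 ?(gt_eqF e0) ?(gt_eqF t21) ?(gt_eqF t11) ?(lt_eqF t11).
rewrite Ht.
have A1 := H1 _ Kg'; have A2 := H2 _ Kz'.
rewrite aff_line in A1; rewrite aff_line in A2.
have D1 : dot a1 (g - z) = aff a1 c1 g - aff a1 c1 z.
  by rewrite /aff dotBr; ring.
have D2 : dot a2 w = aff a2 c2 z - aff a2 c2 g.
  by rewrite /aff dotBr; ring.
rewrite D1 in A1; rewrite D2 in A2.
rewrite -mulf_div mulrC.
apply: ler_pM; [apply: divr_ge0; exact: ltW|apply: divr_ge0; exact: ltW| |].
  apply: ler_divdiv => //; first by rewrite subr_gt0.
  nra.
apply: ler_divdiv => //; first by rewrite subr_gt0.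
nra.
Qed.

End D.

Section E.
Context {R : realType}.

Lemma quad_nonneg (a b : R) : 0 <= b ->
  (forall t : R, 0 < t -> t <= 1 -> 0 <= 2 * a + t * b) -> 0 <= a.
Proof.
move=> b0 H; rewrite leNgt; apply/negP => a0.
have [b1|b1] := leP (- a) (b + 1).
  have t0 : 0 < - a / (b + 1) by rewrite divr_gt0 ?oppr_gt0 // ltr_wpDl.
  have t1 : - a / (b + 1) <= 1 by rewrite ler_pdivrMr ?mul1r // ltr_wpDl.
  have := H _ t0 t1.
  have -> : - a / (b + 1) * b = - a * (b / (b + 1)) by rewrite mulrAC mulrA.
  have : b / (b + 1) <= 1 by rewrite ler_pdivrMr ?mul1r ?lerDl // ltr_wpDl.
  nra.
have := H 1 ltr01 (lexx _); lra.
Qed.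

Lemma lipschitz_cont n (f : 'rV[R]_n -> R) (L : R) : 0 <= L ->
  (forall u v, f u - f v <= L * `|u - v|) -> continuous f.
Proof.
move=> L0 H h B /nbhs_ballP [e /= e0 HB]; apply/nbhs_ballP.
exists (e / (L + 1)) => [|w]; first by rewrite /= divr_gt0 // ltr_wpDl.
rewrite -ball_normE /= => hw; apply: HB; rewrite -ball_normE /=.
have H1 := H h w; have H2 := H w h.
rewrite -normrN opprB in H2.
have : L * `|h - w| <= L * (e / (L + 1)) by rewrite ler_wpM2l // ltW.
have : L * (e / (L + 1)) < e.
  rewrite mulrA ltr_pdivrMr ?ltr_wpDl //; nra.
rewrite ltr_norml; move=> *; apply/andP; split; lra.
Qed.

Lemma dot_self_continuous n (x : 'rV[R]_n) :
  continuous (fun v : 'rV[R]_n => dot (v - x) (v - x)).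
Proof.
rewrite /dot.
suff H : forall s : seq 'I_n,
  continuous (fun v : 'rV[R]_n => \sum_(i <- s) (v - x) ord0 i * (v - x) ord0 i).
  exact: H.
have ci : forall i, continuous (fun v : 'rV[R]_n => (v - x) ord0 i).
  move=> i v; under eq_fun do rewrite !mxE.
  apply: (@continuousB _ _ _ (fun v : 'rV[R]_n => v ord0 i) (fun=> x ord0 i)).
    exact: coord_continuous.
  exact: cst_continuous.
elim=> [|i s IH] v.
  under eq_fun do rewrite big_nil. exact: cst_continuous.
under eq_fun do rewrite big_cons.
apply: (@continuousD _ _ _ (fun v : 'rV[R]_n => (v - x) ord0 i * (v - x) ord0 i)); last exact: IH.
by apply: (@continuousM _ _ (fun v : 'rV[R]_n => (v - x) ord0 i)); apply: ci.
Qed.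

Lemma dot_expand n (u e : 'rV[R]_n) (t : R) :
  dot (u + t *: e) (u + t *: e) = dot u u + 2 * t * dot u e + t ^+ 2 * dot e e.
Proof.
rewrite !dotDl !dotDr !dotZl !dotZr (dotC e u); ring.
Qed.

Lemma separate_param n {T : topologicalType} (A : set T) (F : T -> 'rV[R]_n)
  (x : 'rV[R]_n) : compact A -> A !=set0 -> continuous F ->
  (forall z1 z2 (t : R), A z1 -> A z2 -> 0 < t -> t <= 1 ->
     exists2 z, A z & F z = t *: F z2 + (1 - t) *: F z1) ->
  (forall z, A z -> F z != x) ->
  exists nv : 'rV[R]_n, nv != 0 /\ forall z, A z -> dot nv nv <= dot nv (F z - x).
Proof.
move=> cA A0 cF cvx nx.
have cf : {within A, continuous (fun z => dot (F z - x) (F z - x))}.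
  apply: continuous_subspaceT => z.
  apply: (@continuous_comp _ _ _ F (fun v => dot (v - x) (v - x))); first exact: cF.
  exact: dot_self_continuous.
have [zs zsA zmin] := compact_EVT_min A0 cA cf.
rewrite inE in zsA.
set cs := F zs.
exists (cs - x); split; first by rewrite subr_eq0 nx.
move=> z Az.
set e := F z - cs.
suff : 0 <= dot (cs - x) e.
  have -> : dot (cs - x) (F z - x) = dot (cs - x) (cs - x) + dot (cs - x) e.
    by rewrite -dotDr /e; congr dot; apply/rowP => i; rewrite !mxE; ring.
  lra.
apply: (quad_nonneg (dot_ge0 e)) => t t0 t1.
have [z' Az' Fz'] := cvx zs z t zsA Az t0 t1.
have := zmin z'; rewrite inE => /(_ Az').
have -> : F z' - x = (cs - x) + t *: e.
  rewrite Fz' /e; apply/rowP => i; rewrite !mxE; ring.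
rewrite dot_expand -/cs => H.
have : 0 <= t * (2 * dot (cs - x) e + t * dot e e) by nra.
by rewrite pmulr_rge0.
Qed.

End E.

Section F.
Context {R : realType} {n : nat}.

Lemma le0_of_small (a C : R) : 0 <= C -> (forall t : R, 0 < t -> a <= t * C) -> a <= 0.
Proof.
move=> C0 H; rewrite leNgt; apply/negP => a0.
have t0 : 0 < a / (2 * (C + 1)) by rewrite divr_gt0 // mulr_gt0 // ltr_wpDl.
have := H _ t0.
have C1 : 0 < C + 1 by rewrite ltr_wpDl.
have -> : a / (2 * (C + 1)) * C = (a / 2) * (C / (C + 1)).
  by field; rewrite gt_eqF.
have : C / (C + 1) <= 1 by rewrite ler_pdivrMr ?mul1r ?lerDl.
have : 0 < a / 2 by rewrite divr_gt0.
nra.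
Qed.

Lemma dot_norm_le (h v : 'rV[R]_n) : dot h v <= n%:R * (`|h| * `|v|).
Proof. exact: le_trans (ler_norm _) (dot_le _ _). Qed.

Lemma support_step (G : set 'rV[R]_n) x c (t : R) : compact G -> convex_set_rV G ->
  interior G c -> G x -> ~ interior G x -> 0 < t ->
  exists h : 'rV[R]_n, `|h| = 1 /\
    forall g, G g -> dot h (g - x) <= t * (n%:R * `|x - c|).
Proof.
move=> cpG cvG ic Gx nix t0.
set xt := x + t *: (x - c).
have nGxt : ~ G xt.
  move=> Gxt; apply: nix.
  have t1 : 0 < 1 + t by lra.
  have -> : x = (t / (1 + t)) *: c + (1 - t / (1 + t)) *: xt.
    by apply/rowP => i; rewrite /xt !mxE; field; rewrite gt_eqF.
  apply: interior_convex => //; first by rewrite divr_gt0.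
  by rewrite ler_pdivrMr // mul1r lerDr ler01.
have [nv [nv0 Hnv]] : exists nv : 'rV[R]_n, nv != 0 /\
    forall z, G z -> dot nv nv <= dot nv (id z - xt).
  apply: (separate_param (A := G) (F := id)) => //.
  - by exists x.
  - by move=> z; exact: cvg_id.
  - move=> z1 z2 s G1 G2 s0 s1; exists (s *: z2 + (1 - s) *: z1) => //.
    by apply: cvG => //; exact: ltW.
  - by move=> z Gz; apply/eqP => zE; apply: nGxt; rewrite -zE.
have nn : 0 < `|nv| by rewrite normr_gt0.
exists (- `|nv|^-1 *: nv); split.
  by rewrite normrZ normrN normrV ?unitfE ?gt_eqF // normr_id mulVf ?gt_eqF.
move=> g Gg.
have -> : g - x = (g - xt) + t *: (x - c) by rewrite /xt; apply/rowP => i; rewrite !mxE; ring.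
rewrite dotDr.
have H1 : dot (- `|nv|^-1 *: nv) (g - xt) <= 0.
  rewrite dotZl mulNr oppr_le0; apply: mulr_ge0; first by rewrite invr_ge0 ltW.
  have := Hnv g Gg; rewrite /id => H; exact: le_trans (dot_ge0 nv) H.
have H2 : dot (- `|nv|^-1 *: nv) (t *: (x - c)) <= t * (n%:R * `|x - c|).
  apply: le_trans (dot_norm_le _ _) _.
  rewrite normrZ normrN normrV ?unitfE ?gt_eqF // normr_id mulVf ?gt_eqF // mul1r.
  rewrite normrZ gtr0_norm //; lra.
lra.
Qed.

Lemma supp_hyp (G : set 'rV[R]_n) x : convex_body G -> bd G x ->
  exists h : 'rV[R]_n, h != 0 /\ forall g, G g -> dot h (g - x) <= 0.
Proof.
move=> [cpG cvG [c ic]] bdx.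
have clG := compact_closedK cpG.
have [Gx nix] := proj1 (bd_closedE _ clG) bdx.
have [M HM] := compact_normB cpG.
pose L := n%:R * (M + `|x|).
have L0 : 0 <= L.
  rewrite /L mulr_ge0 // addr_ge0 //; apply: le_trans (HM x Gx); exact: normr_ge0.
have gxb : forall g, G g -> `|g - x| <= M + `|x|.
  move=> g Gg; apply: le_trans (ler_normB _ _) _; rewrite lerD2r; exact: HM.
pose E (h : 'rV[R]_n) := [set dot h (g - x) | g in G].
pose Phi h := sup (E h).
have hsE : forall h, has_sup (E h).
  move=> h; split; first by exists (dot h (x - x)); exists x.
  exists (`|h| * L) => _ [g Gg <-].
  apply: le_trans (dot_norm_le _ _) _.
  rewrite /L; have := gxb g Gg.
  have : (0 : R) <= n%:R * `|h| by rewrite mulr_ge0.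
  nra.
have ubE : forall h g, G g -> dot h (g - x) <= Phi h.
  by move=> h g Gg; apply: sup_upper_bound (hsE h) _ _; exists g.
have Lip : forall u v, Phi u - Phi v <= L * `|u - v|.
  move=> u v; rewrite lerBlDl; apply: ge_sup; first by exists (dot u (x - x)); exists x.
  move=> _ [g Gg <-].
  have -> : dot u (g - x) = dot v (g - x) + dot (u - v) (g - x) by rewrite dotBl; ring.
  apply: lerD; first exact: ubE.
  apply: le_trans (dot_norm_le _ _) _.
  rewrite /L; have := gxb g Gg.
  have : (0 : R) <= n%:R * `|u - v| by rewrite mulr_ge0.
  nra.
have cPhi : continuous Phi by apply: (lipschitz_cont L0 Lip).
pose S := [set h : 'rV[R]_n | `|h| = 1].
have cS : compact S.
  apply: bounded_closed_compact.
    by apply: (@normB_bounded _ _ _ 1) => h ->.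
  apply: (@closed_comp _ _ (fun h : 'rV[R]_n => `|h|) [set 1]).
    by move=> h _; exact: norm_continuous.
  exact: closed_eq.
have [h1 [h11 _]] := support_step cpG cvG ic Gx nix ltr01.
have S0 : S !=set0 by exists h1.
have [hs hsS hsmin] := EVT_min_rV S0 cS (continuous_subspaceT cPhi).
rewrite inE in hsS.
have Phis : Phi hs <= 0.
  apply: (@le0_of_small _ (n%:R * `|x - c|)); first by rewrite mulr_ge0.
  move=> t t0; have [ht [ht1 Ht]] := support_step cpG cvG ic Gx nix t0.
  apply: le_trans (hsmin ht _) _; first by rewrite inE.
  apply: ge_sup; first by exists (dot ht (x - x)); exists x.
  by move=> _ [g Gg <-]; apply: Ht.
exists hs; split.
  apply/eqP => hs0; have : `|hs| = 1 := hsS.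
  by rewrite hs0 normr0 => /eqP; rewrite eq_sym oner_eq0.
move=> g Gg; exact: le_trans (ubE hs g Gg) Phis.
Qed.

End F.

Section G1.
Context {R : realType}.

Lemma dot_row_mx n1 n2 (v : 'rV[R]_(n1 + n2)) (u1 : 'rV[R]_n1) (u2 : 'rV[R]_n2) :
  dot v (row_mx u1 u2) = dot (lsubmx v) u1 + dot (rsubmx v) u2.
Proof.
rewrite /dot big_split_ord /=; congr (_ + _); apply: eq_bigr => i _.
  by rewrite row_mxEl mxE.
by rewrite row_mxEr mxE.
Qed.

Lemma closed_dot_forall m {I : Type} (P : I -> Prop) (w : I -> 'rV[R]_m) (b : I -> R) :
  closed [set v : 'rV[R]_m | forall i, P i -> 0 <= dot v (w i) + b i].
Proof.
have -> : [set v : 'rV[R]_m | forall i, P i -> 0 <= dot v (w i) + b i] =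
    \bigcap_(i in P) [set v | 0 <= dot v (w i) + b i].
  by apply/seteqP; split => v /= H.
apply: closed_bigI => i _.
apply: (@closed_comp _ _ (fun v : 'rV[R]_m => dot v (w i) + b i) [set y | 0 <= y]).
  move=> v _.
  apply: (@continuousD _ _ _ (fun v : 'rV[R]_m => dot v (w i)) (fun=> b i)).
    exact: dot_continuous.
  exact: cst_continuous.
exact: closed_ge.
Qed.

Lemma norm_le_coord m (v : 'rV[R]_m) (B : R) : 0 <= B ->
  (forall i, `|v ord0 i| <= B) -> `|v| <= B.
Proof.
move=> B0 H; rewrite /Num.Def.normr /= mx_normrE; apply/bigmax_leP; split => // -[i j] _.
by rewrite /= (ord1 i); apply: H.
Qed.

Lemma dot_delta m (a : 'rV[R]_m) j : dot a (delta_mx 0 j) = a ord0 j.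
Proof.
rewrite /dot (bigD1 j) //= big1 => [|i ij]; first by rewrite !mxE !eqxx mulr1 addr0.
by rewrite !mxE (negbTE ij) andbF mulr0.
Qed.

Lemma aff_cont m (a x : 'rV[R]_m) (b : R) : continuous (fun k : 'rV[R]_m => b + dot a (k - x)).
Proof.
apply: (@lipschitz_cont _ _ _ (m%:R * `|a|)); first by rewrite mulr_ge0.
move=> u v; rewrite opprD addrACA subrr add0r -dotBr.
have -> : u - x - (v - x) = u - v by apply/rowP => i; rewrite !mxE; ring.
by apply: le_trans (dot_norm_le _ _) _; rewrite mulrA.
Qed.

Lemma coef_bound m (K : set 'rV[R]_m) x (a : 'rV[R]_m) (r : R) : 0 < r ->
  (forall y, `|y - x| < r -> K y) ->
  (forall k, K k -> 0 <= 1 + dot a (k - x)) -> forall j, `|a ord0 j| <= 2 / r.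
Proof.
move=> r0 Hr Ha j.
have ej : `|(delta_mx 0 j : 'rV[R]_m)| <= 1.
  apply: norm_le_coord => // i; rewrite !mxE.
  by case: (_ && _); rewrite ?normr1 ?normr0.
have H1 : forall s : R, `|s| <= r / 2 -> 0 <= 1 + s * a ord0 j.
  move=> s hs.
  have E : x + s *: delta_mx 0 j - x = s *: delta_mx 0 j.
    by apply/rowP => i; rewrite !mxE; ring.
  have Kk : K (x + s *: delta_mx 0 j).
    apply: Hr; rewrite E normrZ.
    apply: le_lt_trans (_ : _ <= r / 2) _.
      apply: le_trans _ hs; rewrite -[X in _ <= X]mulr1; exact: ler_wpM2l.
    by rewrite ltr_pdivrMr // ltr_pMr // ltr1n.
  by have := Ha _ Kk; rewrite E dotZr dot_delta mulrC.
have h2 : `|r / 2| <= r / 2 by rewrite ger0_norm // divr_ge0 // ltW.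
have h3 : `|- (r / 2)| <= r / 2 by rewrite normrN.
have A1 := H1 _ h2; have A2 := H1 _ h3.
rewrite ler_norml; apply/andP; split.
  rewrite -(@ler_pM2l _ (r / 2)) ?divr_gt0 //.
  have -> : r / 2 * - (2 / r) = -1 by field; rewrite gt_eqF.
  lra.
rewrite -(@ler_pM2l _ (r / 2)) ?divr_gt0 //.
have -> : r / 2 * (2 / r) = 1 by field; rewrite gt_eqF.
lra.
Qed.

Lemma comb_scale m (al be : R) (u w : 'rV[R]_m) : 0 <= al -> 0 <= be ->
  (al + be) *: (if al + be == 0 then u else (al / (al + be)) *: w + (be / (al + be)) *: u)
  = al *: w + be *: u.
Proof.
move=> a0 b0; have [E|E] := eqVneq (al + be) 0.
  have al0 : al = 0 by move/eqP: E; rewrite (paddr_eq0 a0 b0) => /andP [/eqP].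
  have be0 : be = 0 by move/eqP: E; rewrite (paddr_eq0 a0 b0) => /andP [_ /eqP].
  by rewrite E al0 be0 !scale0r addr0.
by rewrite scalerDr !scalerA !mulrA !(mulrC (al + be)) -!mulrA divff // !mulr1.
Qed.

End G1.

Section G2.
Context {R : realType} {n : nat}.

Lemma dot_row_row n1 n2 (b1 u1 : 'rV[R]_n1) (b2 u2 : 'rV[R]_n2) :
  dot (row_mx b1 b2) (row_mx u1 u2) = dot b1 u1 + dot b2 u2.
Proof. by rewrite dot_row_mx row_mxKl row_mxKr. Qed.

Lemma face_convex (K : set 'rV[R]_n) (a x : 'rV[R]_n) : convex_set_rV K ->
  forall u w (s : R), K u /\ 1 + dot a (u - x) = 0 -> K w /\ 1 + dot a (w - x) = 0 ->
  0 <= s -> s <= 1 -> K (s *: w + (1 - s) *: u) /\ 1 + dot a (s *: w + (1 - s) *: u - x) = 0.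
Proof.
move=> cK u w s [Ku lu] [Kw lw] s0 s1; split; first exact: cK.
have -> : s *: w + (1 - s) *: u - x = s *: (w - x) + (1 - s) *: (u - x).
  by apply/rowP => i; rewrite !mxE; ring.
rewrite dotDr !dotZr.
have -> : dot a (w - x) = -1 by lra.
have -> : dot a (u - x) = -1 by lra.
ring.
Qed.

Lemma face_convex_gen (K : set 'rV[R]_n) (a x : 'rV[R]_n) : convex_set_rV K ->
  forall u w (al be : R), K u /\ 1 + dot a (u - x) = 0 -> K w /\ 1 + dot a (w - x) = 0 ->
  0 <= al -> 0 <= be ->
  let Q := if al + be == 0 then u else (al / (al + be)) *: w + (be / (al + be)) *: u in
  K Q /\ 1 + dot a (Q - x) = 0.
Proof.
move=> cK u w al be Hu Hw a0 b0 /=.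
case: eqVneq => [//|E].
have ab : 0 < al + be by rewrite lt_def E addr_ge0.
have -> : be / (al + be) = 1 - al / (al + be) by field.
apply: face_convex => //; first by rewrite divr_ge0 // ltW.
by rewrite ler_pdivrMr // mul1r lerDl.
Qed.

Lemma lp_main (K G : set 'rV[R]_n) x c h :
  compact K -> convex_set_rV K -> interior K x ->
  (forall g, G g -> dot h (g - x) <= 0) -> dot h (c - x) < 0 ->
  exists a1 a2 : 'rV[R]_n, exists q p : 'rV[R]_n, exists s : R,
   [/\ (forall k, K k -> 0 <= 1 + dot a1 (k - x)),
       (forall k, K k -> 0 <= 1 + dot a2 (k - x)),
       (forall g, G g -> dot (a1 - a2) (g - x) <= 0),
       ((K q /\ 1 + dot a1 (q - x) = 0) /\ (K p /\ 1 + dot a2 (p - x) = 0)) &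
       (0 < s < 1 /\ x = (1 - s) *: q + s *: p)].
Proof.
move=> cpK cK ix Hh hc.
have clK := compact_closedK cpK.
have [M HM] := compact_normB cpK.
have [r r0 Hr] := proj1 (interiorP _ _) ix.
have Kx : K x by apply: interior_subset.
have kxb : forall k, K k -> `|k - x| <= M + `|x|.
  move=> k Kk; apply: le_trans (ler_normB _ _) _; rewrite lerD2r; exact: HM.
pose T1 := [set v : 'rV[R]_(n + n) | forall k, K k -> 0 <= dot v (row_mx (k - x) 0) + 1].
pose T2 := [set v : 'rV[R]_(n + n) | forall k, K k -> 0 <= dot v (row_mx 0 (k - x)) + 1].
pose T3 := [set v : 'rV[R]_(n + n) | forall g, G g -> 0 <= dot v (row_mx (x - g) (g - x)) + 0].
pose T := T1 `&` T2 `&` T3.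
have clT : closed T.
  apply: closedI; first apply: closedI.
  - exact: (@closed_dot_forall _ _ _ K (fun k => row_mx (k - x) 0) (fun=> 1)).
  - exact: (@closed_dot_forall _ _ _ K (fun k => row_mx 0 (k - x)) (fun=> 1)).
  - exact: (@closed_dot_forall _ _ _ G (fun g => row_mx (x - g) (g - x)) (fun=> 0)).
have bT : forall v, T v -> `|v| <= 2 / r.
  move=> v [[H1 H2] _]; apply: norm_le_coord; first by rewrite divr_ge0 // ltW.
  move=> i; case: (splitP i) => j ij.
  - have -> : i = lshift n j by apply/val_inj.
    rewrite -[v ord0 _]/(v ord0 (lshift n j)).
    have -> : v ord0 (lshift n j) = lsubmx v ord0 j by rewrite mxE.
    apply: (coef_bound r0 Hr) => k Kk; have := H1 k Kk.
    by rewrite dot_row_mx dot0r addr0 addrC.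
  - have -> : i = rshift n j by apply/val_inj.
    have -> : v ord0 (rshift n j) = rsubmx v ord0 j by rewrite mxE.
    apply: (coef_bound r0 Hr) => k Kk; have := H2 k Kk.
    by rewrite dot_row_mx dot0r add0r addrC.
have cT : compact T.
  apply: bounded_closed_compact => //; exact: (normB_bounded bT).
have T0 : T 0.
  by split; [split|] => k _; rewrite dot0l ?add0r ?ler01.
pose J (v : 'rV[R]_(n + n)) := dot v (row_mx (x - c) (c - x)).
have [vs vsT vsmax] := EVT_max_rV (ex_intro _ 0 T0) cT (continuous_subspaceT (@dot_continuous R (n + n) (row_mx (x - c) (c - x)))).
rewrite inE in vsT.
have vsmax' : forall v, T v -> J v <= J vs by move=> v Tv; apply: vsmax; rewrite inE.
set a1 := lsubmx vs; set a2 := rsubmx vs.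
have L1 : forall k, dot vs (row_mx (k - x) 0) = dot a1 (k - x).
  by move=> k; rewrite dot_row_mx dot0r addr0.
have L2 : forall k, dot vs (row_mx 0 (k - x)) = dot a2 (k - x).
  by move=> k; rewrite dot_row_mx dot0r add0r.
have L3 : forall g, dot vs (row_mx (x - g) (g - x)) = - dot (a1 - a2) (g - x).
  move=> g; rewrite dot_row_mx dotBl -/a1 -/a2.
  have -> : x - g = - (g - x) by rewrite opprB.
  by rewrite dotNr opprB addrC.
have [[T1s T2s] T3s] := vsT.
have l1 : forall k, K k -> 0 <= 1 + dot a1 (k - x).
  by move=> k Kk; have := T1s k Kk; rewrite L1 addrC.
have l2 : forall k, K k -> 0 <= 1 + dot a2 (k - x).
  by move=> k Kk; have := T2s k Kk; rewrite L2 addrC.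
have l3 : forall g, G g -> dot (a1 - a2) (g - x) <= 0.
  by move=> g Gg; have := T3s g Gg; rewrite L3 addr0 oppr_ge0.
have Jpos : 0 < J vs.
  pose B := n%:R * (`|h| * (M + `|x|)).
  have B0 : 0 <= B by rewrite mulr_ge0 // mulr_ge0 // (le_trans _ (kxb x Kx)).
  pose eps := (B + 1)^-1.
  have e0 : 0 < eps by rewrite invr_gt0 ltr_wpDl.
  pose ve : 'rV[R]_(n + n) := row_mx (eps *: h) 0.
  have Tve : T ve.
    split; [split|] => k Kk; rewrite /ve dot_row_row ?dot0l ?dot0r ?addr0 ?add0r ?ler01 // dotZl.
    - have : `|dot h (k - x)| <= B.
        apply: le_trans (dot_le _ _) _; rewrite /B ler_wpM2l // ler_wpM2l //; exact: kxb.
      rewrite ler_norml => /andP [hb _].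
      have : eps * (B + 1) = 1 by rewrite mulVf // gt_eqF // ltr_wpDl.
      nra.
    - have -> : x - k = - (k - x) by rewrite opprB.
      rewrite dotNr; have := Hh k Kk; nra.
  apply: lt_le_trans (vsmax' _ Tve).
  rewrite /J /ve dot_row_row dot0l addr0 dotZl.
  have -> : x - c = - (c - x) by rewrite opprB.
  rewrite dotNr; nra.
have NP : forall (nv : 'rV[R]_n) (be : R), 0 < be ->
    ~ (forall k, K k -> (1 + dot a1 (k - x) = 0 \/ 1 + dot a2 (k - x) = 0) ->
       be < dot nv (k - x)).
  move=> nv be be0 Hk.
  pose N := K `&` ((fun k : 'rV[R]_n => 0 + dot nv (k - x)) @^-1` [set y | y <= be]).
  have [m [m0 [m1 Hm]]] : exists m : R, 0 < m /\ m <= 1 /\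
      forall k, N k -> m <= 1 + dot a1 (k - x) /\ m <= 1 + dot a2 (k - x).
    case: (pselect (N !=set0)) => [N0|N0]; last first.
      exists 1; split => //; split => // k Nk; exfalso; apply: N0; by exists k.
    have cN : compact N.
      apply: compact_closedI => //.
      apply: (@closed_comp _ _ (fun k : 'rV[R]_n => 0 + dot nv (k - x)) [set y | y <= be]).
        by move=> k _; apply: aff_cont.
      exact: closed_le.
    have [k1 k1N k1min] := EVT_min_rV N0 cN (continuous_subspaceT (@aff_cont R n a1 x 1)).
    have [k2 k2N k2min] := EVT_min_rV N0 cN (continuous_subspaceT (@aff_cont R n a2 x 1)).
    rewrite inE in k1N; rewrite inE in k2N.
    have p1 : 0 < 1 + dot a1 (k1 - x).
      case: k1N => Kk1 /= Nk1; rewrite lt_def l1 // andbT; apply/eqP => E.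
      have := Hk k1 Kk1 (or_introl E); rewrite add0r in Nk1; lra.
    have p2 : 0 < 1 + dot a2 (k2 - x).
      case: k2N => Kk2 /= Nk2; rewrite lt_def l2 // andbT; apply/eqP => E.
      have := Hk k2 Kk2 (or_intror E); rewrite add0r in Nk2; lra.
    exists (Num.min (Num.min (1 + dot a1 (k1 - x)) (1 + dot a2 (k2 - x))) 1).
    split; first by rewrite !lt_min p1 p2 ltr01.
    split; first by rewrite ge_min lexx orbT.
    move=> k Nk; have H1 := k1min k; have H2 := k2min k.
    rewrite !inE in H1 H2; have {}H1 := H1 Nk; have {}H2 := H2 Nk.
    split; rewrite !ge_min.
      by rewrite H1.
    by rewrite H2 orbT.
  pose B := n%:R * (`|nv| * (M + `|x|)) + be.
  have Bb : be <= B.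
    by rewrite /B lerDr mulr_ge0 // mulr_ge0 // (le_trans _ (kxb x Kx)).
  have Blow : forall k, K k -> - B <= dot nv (k - x) - be.
    move=> k Kk; have : `|dot nv (k - x)| <= n%:R * (`|nv| * (M + `|x|)).
      apply: le_trans (dot_le _ _) _; rewrite ler_wpM2l // ler_wpM2l //; exact: kxb.
    rewrite ler_norml => /andP [hb _]; rewrite /B; lra.
  have B1 : 0 < B + 1 by lra.
  pose eta := m / (B + 1).
  have eta0 : 0 < eta by rewrite divr_gt0.
  have etaB : eta * B <= m.
    rewrite /eta mulrAC ler_pdivrMr // ler_wpM2l ?ltW //; lra.
  have etabe : eta * be < 1.
    have : eta * be <= eta * B by apply: ler_wpM2l => //; exact: ltW.
    have : eta * B < 1.
      rewrite /eta mulrAC ltr_pdivrMr // mul1r.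
      have : m * B <= 1 * B by rewrite ler_wpM2r // (le_trans (ltW be0)).
      lra.
    lra.
  have pos : forall k, K k -> 0 <= 1 + dot a1 (k - x) + eta * (dot nv (k - x) - be) /\
                           0 <= 1 + dot a2 (k - x) + eta * (dot nv (k - x) - be).
    move=> k Kk; have [kN|kN] := leP (dot nv (k - x)) be.
      have Nk : N k by split => //=; rewrite add0r.
      have [H1 H2] := Hm k Nk.
      have : - (eta * B) <= eta * (dot nv (k - x) - be).
        rewrite -mulrN; apply: ler_wpM2l; [exact: ltW|exact: Blow].
      lra.
    have : 0 <= eta * (dot nv (k - x) - be).
      by apply: mulr_ge0; [exact: ltW|rewrite subr_ge0; exact: ltW].
    have := l1 k Kk; have := l2 k Kk; lra.
  pose den := 1 - eta * be.
  have den0 : 0 < den by rewrite /den subr_gt0.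
  have den1 : den < 1 by rewrite /den ltrBlDr ltrDl mulr_gt0.
  pose v' := den^-1 *: (vs + eta *: row_mx nv nv).
  have dv : forall (u1 u2 : 'rV[R]_n), dot v' (row_mx u1 u2) =
      den^-1 * (dot vs (row_mx u1 u2) + eta * (dot nv u1 + dot nv u2)).
    by move=> u1 u2; rewrite /v' dotZl dotDl dotZl dot_row_row.
  have Tv' : T v'.
    split; [split|] => k Kk; rewrite dv ?dot0r ?addr0 ?add0r.
    - rewrite L1; have [P1 _] := pos k Kk.
      have -> : den^-1 * (dot a1 (k - x) + eta * dot nv (k - x)) + 1 =
        den^-1 * (1 + dot a1 (k - x) + eta * (dot nv (k - x) - be)).
        by rewrite /den; field; rewrite gt_eqF.
      by rewrite mulr_ge0 // invr_ge0 ltW.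
    - rewrite L2; have [_ P2] := pos k Kk.
      have -> : den^-1 * (dot a2 (k - x) + eta * dot nv (k - x)) + 1 =
        den^-1 * (1 + dot a2 (k - x) + eta * (dot nv (k - x) - be)).
        by rewrite /den; field; rewrite gt_eqF.
      by rewrite mulr_ge0 // invr_ge0 ltW.
    - rewrite L3.
      have -> : dot nv (x - k) = - dot nv (k - x) by rewrite -dotNr opprB.
      rewrite addNr mulr0 addr0; apply: mulr_ge0; first by rewrite invr_ge0 ltW.
      by rewrite oppr_ge0; apply: l3.
  have := vsmax' _ Tv'; rewrite /J dv.
  have -> : dot nv (x - c) = - dot nv (c - x) by rewrite -dotNr opprB.
  rewrite addNr mulr0 addr0.
  have : 1 < den^-1 by rewrite invf_gt1.
  have := Jpos; rewrite /J; nra.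
pose Z1 := K `&` ((fun k : 'rV[R]_n => 1 + dot a1 (k - x)) @^-1` [set 0]).
pose Z2 := K `&` ((fun k : 'rV[R]_n => 1 + dot a2 (k - x)) @^-1` [set 0]).
have cZ1 : compact Z1.
  apply: compact_closedI => //.
  apply: (@closed_comp _ _ (fun k : 'rV[R]_n => 1 + dot a1 (k - x)) [set 0]).
    by move=> k _; apply: aff_cont.
  exact: closed_eq.
have cZ2 : compact Z2.
  apply: compact_closedI => //.
  apply: (@closed_comp _ _ (fun k : 'rV[R]_n => 1 + dot a2 (k - x)) [set 0]).
    by move=> k _; apply: aff_cont.
  exact: closed_eq.
have xZ1 : forall k, Z1 k -> k != x.
  move=> k [_ /= E]; apply/eqP => kx; move: E; rewrite kx subrr dot0r addr0 => /eqP.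
  by rewrite oner_eq0.
have xZ2 : forall k, Z2 k -> k != x.
  move=> k [_ /= E]; apply/eqP => kx; move: E; rewrite kx subrr dot0r addr0 => /eqP.
  by rewrite oner_eq0.
have cvZ1 : forall z1 z2 (t : R), Z1 z1 -> Z1 z2 -> 0 < t -> t <= 1 ->
    exists2 z, Z1 z & id z = t *: id z2 + (1 - t) *: id z1.
  move=> z1 z2 t H1 H2 t0 t1; exists (t *: z2 + (1 - t) *: z1) => //.
  exact: (face_convex cK H1 H2 (ltW t0) t1).
have cvZ2 : forall z1 z2 (t : R), Z2 z1 -> Z2 z2 -> 0 < t -> t <= 1 ->
    exists2 z, Z2 z & id z = t *: id z2 + (1 - t) *: id z1.
  move=> z1 z2 t H1 H2 t0 t1; exists (t *: z2 + (1 - t) *: z1) => //.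
  exact: (face_convex cK H1 H2 (ltW t0) t1).
have [ex|nex] := pselect (exists q p : 'rV[R]_n, exists s : R,
   ((K q /\ 1 + dot a1 (q - x) = 0) /\ (K p /\ 1 + dot a2 (p - x) = 0)) /\
   (0 < s < 1 /\ x = (1 - s) *: q + s *: p)).
  have [q [p [s [Hqp Hs]]]] := ex.
  by exists a1, a2, q, p, s; split.
exfalso.
have idc : continuous (fun z : 'rV[R]_n => z) by move=> z; exact: cvg_id.
have [Z10|Z10] := pselect (Z1 !=set0); have [Z20|Z20] := pselect (Z2 !=set0).
-
  pose A := (Z1 `*` Z2) `*` `[(0 : R), 1]%classic.
  pose F := fun z : ('rV[R]_n * 'rV[R]_n) * R => (1 - z.2) *: z.1.1 + z.2 *: z.1.2.
  have cA : compact A.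
    apply: compact_setX; first exact: compact_setX.
    exact: segment_compact.
  have [q0 Zq0] := Z10; have [p0 Zp0] := Z20.
  have A0 : A !=set0.
    exists ((q0, p0), 0); split => //=; rewrite in_itv /= lexx ler01 //.
  have cF : continuous F.
    move=> z.
    have c2 : {for z, continuous (fun z : ('rV[R]_n * 'rV[R]_n) * R => z.2)} by exact: cvg_snd.
    have c11 : {for z, continuous (fun z : ('rV[R]_n * 'rV[R]_n) * R => z.1.1)}.
      apply: (@continuous_comp _ _ _ fst fst); exact: cvg_fst.
    have c12 : {for z, continuous (fun z : ('rV[R]_n * 'rV[R]_n) * R => z.1.2)}.
      apply: (@continuous_comp _ _ _ fst snd); [exact: cvg_fst|exact: cvg_snd].
    apply: (@continuousD _ _ _ (fun z : ('rV[R]_n * 'rV[R]_n) * R => (1 - z.2) *: z.1.1)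
                               (fun z => z.2 *: z.1.2)).
      apply: (@continuousZ _ _ _ (fun z : ('rV[R]_n * 'rV[R]_n) * R => 1 - z.2) (fun z => z.1.1)) => //.
      apply: cvgB => //; exact: cvg_cst.
    exact: (@continuousZ _ _ _ (fun z : ('rV[R]_n * 'rV[R]_n) * R => z.2) (fun z => z.1.2)).
  have cvA : forall z1 z2 (t : R), A z1 -> A z2 -> 0 < t -> t <= 1 ->
      exists2 z, A z & F z = t *: F z2 + (1 - t) *: F z1.
    move=> [[q1 p1] s1] [[q2 p2] s2] t [[Zq1 Zp1] /= s1i] [[Zq2 Zp2] /= s2i] t0 t1.
    move: s1i s2i; rewrite !in_itv /= => /andP [s10 s11] /andP [s20 s21].
    pose al := t * (1 - s2); pose be := (1 - t) * (1 - s1).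
    pose ga := t * s2; pose de := (1 - t) * s1.
    have al0 : 0 <= al by rewrite mulr_ge0 ?subr_ge0 // ltW.
    have be0 : 0 <= be by rewrite mulr_ge0 ?subr_ge0.
    have ga0 : 0 <= ga by rewrite mulr_ge0 // ltW.
    have de0 : 0 <= de by rewrite mulr_ge0 ?subr_ge0.
    exists (((if al + be == 0 then q1 else (al / (al + be)) *: q2 + (be / (al + be)) *: q1),
             (if ga + de == 0 then p1 else (ga / (ga + de)) *: p2 + (de / (ga + de)) *: p1)),
            ga + de).
      split; first split.
      - exact: (face_convex_gen cK Zq1 Zq2 al0 be0).
      - exact: (face_convex_gen cK Zp1 Zp2 ga0 de0).
      - rewrite /= in_itv /= addr_ge0 //= /ga /de; nra.
    rewrite /F /=.
    have -> : 1 - (ga + de) = al + be by rewrite /al /be /ga /de; ring.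
    rewrite !comb_scale //.
    by apply/rowP => i; rewrite !mxE /al /be /ga /de; ring.
  have nxA : forall z, A z -> F z != x.
    move=> [[q p] s] [[Zq Zp] /= si]; move: si; rewrite in_itv /= => /andP [s0 s1].
    apply/eqP => Fx; rewrite /F /= in Fx.
    have [s00|s0p] := eqVneq s 0.
      move: Fx; rewrite s00 subr0 scale1r scale0r addr0 => qx.
      by move: (xZ1 q Zq); rewrite qx eqxx.
    have [s11|s1p] := eqVneq s 1.
      move: Fx; rewrite s11 subrr scale0r add0r scale1r => px.
      by move: (xZ2 p Zp); rewrite px eqxx.
    apply: nex; exists q, p, s; split; first by split.
    split => //; apply/andP; split; rewrite lt_neqAle ?s0 ?s1 andbT //.
    by rewrite eq_sym.
  have [nv [nv0 Hnv]] := separate_param cA A0 cF cvA nxA.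
  apply: (NP nv (dot nv nv / 2)); first by rewrite divr_gt0 // dot_gt0.
  move=> k Kk [E|E].
  + have ki : `[(0:R), 1]%classic 0 by rewrite /= in_itv /= lexx ler01.
    have := Hnv ((k, p0), 0) (conj (conj (conj Kk E) Zp0) ki).
    rewrite /F /= subr0 scale1r scale0r addr0.
    have := dot_gt0 nv0; lra.
  + have ki : `[(0:R), 1]%classic 1 by rewrite /= in_itv /= lexx ler01.
    have := Hnv ((q0, k), 1) (conj (conj Zq0 (conj Kk E)) ki).
    rewrite /F /= subrr scale0r add0r scale1r.
    have := dot_gt0 nv0; lra.
-
  have [nv [nv0 Hnv]] := separate_param cZ1 Z10 idc cvZ1 xZ1.
  apply: (NP nv (dot nv nv / 2)); first by rewrite divr_gt0 // dot_gt0.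
  move=> k Kk [E|E].
    have := Hnv k (conj Kk E); have := dot_gt0 nv0; lra.
  by exfalso; apply: Z20; exists k.
-
  have [nv [nv0 Hnv]] := separate_param cZ2 Z20 idc cvZ2 xZ2.
  apply: (NP nv (dot nv nv / 2)); first by rewrite divr_gt0 // dot_gt0.
  move=> k Kk [E|E].
    by exfalso; apply: Z10; exists k.
  have := Hnv k (conj Kk E); have := dot_gt0 nv0; lra.
-
  apply: (NP 0 1 ltr01) => k Kk [E|E].
    by exfalso; apply: Z10; exists k.
  by exfalso; apply: Z20; exists k.
Qed.

End G2.

Section H.
Context {R : realType} {n : nat}.
Implicit Types (K G : set 'rV[R]_n).

Lemma zero_not_interior K x a q : (forall k, K k -> 0 <= 1 + dot a (k - x)) ->
  1 + dot a (q - x) = 0 -> ~ interior K q.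
Proof.
move=> Ha Hq /interiorP [r r0 Hr].
set N := `|q - x|.
have N0 : 0 <= N by apply: normr_ge0.
pose e := r / (2 * (N + 1)).
have e0 : 0 < e by rewrite divr_gt0 // mulr_gt0 // ltr_wpDl.
have Kk : K (q + e *: (q - x)).
  apply: Hr; rewrite (addrC q) addrK normrZ gtr0_norm // -/N.
  have -> : e * N = r / 2 * (N / (N + 1)) by rewrite /e; field; rewrite gt_eqF // ltr_wpDl.
  have : N / (N + 1) < 1 by rewrite ltr_pdivrMr ?ltr_wpDl // mul1r ltrDl.
  have : 0 < r / 2 by rewrite divr_gt0.
  nra.
have := Ha _ Kk.
have -> : q + e *: (q - x) - x = (1 + e) *: (q - x) by apply/rowP => i; rewrite !mxE; ring.
rewrite dotZr.
have -> : dot a (q - x) = -1 by lra.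
lra.
Qed.

Lemma pos_interior K x a k : (forall k, K k -> 0 <= 1 + dot a (k - x)) ->
  interior K k -> 0 < 1 + dot a (k - x).
Proof.
move=> Ha ik; rewrite lt_def Ha ?andbT; last exact: interior_subset.
by apply/eqP => E; exact: (zero_not_interior Ha E ik).
Qed.

Lemma affE (a x k : 'rV[R]_n) : aff a (1 - dot a x) k = 1 + dot a (k - x).
Proof. by rewrite /aff dotBr; ring. Qed.

Lemma hd_ge0 K z g : compact K -> convex_set_rV K -> interior K z -> interior K g ->
  0 <= hilbert_dist K z g.
Proof.
move=> cpK cK iz ig.
have a1 : forall k, aff (0 : 'rV[R]_n) 1 k = 1 by move=> k; rewrite /aff dot0l add0r.
have := @hilbert_lb R n K 0 1 0 1 z g cpK cK iz ig.
rewrite !a1 mul1r divr1 ln1 mul0r; apply; try exact: ltr01; by move=> k _; rewrite a1 ler01.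
Qed.

Lemma line_dist K x a1 a2 q p (sg s : R) : compact K -> convex_set_rV K -> interior K x ->
  (forall k, K k -> 0 <= 1 + dot a1 (k - x)) ->
  (forall k, K k -> 0 <= 1 + dot a2 (k - x)) ->
  K q -> 1 + dot a1 (q - x) = 0 -> K p -> 1 + dot a2 (p - x) = 0 ->
  0 < sg -> sg < 1 -> x = (1 - sg) *: q + sg *: p -> 0 < s -> s < 1 ->
  hilbert_dist K x (x + s *: (p - x)) = ln ((1 + s * ((1 - sg) / sg)) / (1 - s)) / 2.
Proof.
move=> cpK cK ix l1 l2 Kq zq Kp zp sg0 sg1 xE s0 s1.
set w := p - q.
have pxE : p - x = (1 - sg) *: w by rewrite xE /w; apply/rowP => i; rewrite !mxE; ring.
have qxE : q - x = (- sg) *: w by rewrite xE /w; apply/rowP => i; rewrite !mxE; ring.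
have w0 : w != 0.
  apply/eqP => w0; move: zq; rewrite qxE w0 scaler0 dot0r addr0 => /eqP.
  by rewrite oner_eq0.
set y := x + s *: (p - x).
have yxE : y - x = (s * (1 - sg)) *: w by rewrite /y pxE; apply/rowP => i; rewrite !mxE; ring.
have sg1' : 0 < 1 - sg by rewrite subr_gt0.
have c0 : 0 < s * (1 - sg) by rewrite mulr_gt0.
have xy : x != y.
  apply/eqP => E; move: yxE; rewrite -E subrr => /esym/eqP.
  by rewrite scaler_eq0 (negbTE w0) orbF (gt_eqF c0).
have iy : interior K y by apply: interior_convex2 => //; exact: ltW.
have nq : ~ interior K q by apply: (zero_not_interior l1 zq).
have np : ~ interior K p by apply: (zero_not_interior l2 zp).
have E1 : ray_exit K y x = q.
  apply: (ray_exitE (t := (s * (1 - sg) + sg) / (s * (1 - sg)))) => //.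
    by apply: divr_ge0; [apply: addr_ge0; exact: ltW | exact: ltW].
  have -> : q = x + (- sg) *: w by rewrite -qxE addrC subrK.
  have -> : x - y = - ((s * (1 - sg)) *: w) by rewrite -yxE opprB.
  have -> : y = x + (s * (1 - sg)) *: w by rewrite -yxE addrC subrK.
  by apply/rowP => i; rewrite !mxE; field; rewrite !gt_eqF.
have E2 : ray_exit K x y = p.
  apply: (ray_exitE (t := s^-1)) => //; first by rewrite invr_ge0; exact: ltW.
  rewrite yxE.
  have -> : p = x + (1 - sg) *: w by rewrite -pxE addrC subrK.
  by apply/rowP => i; rewrite !mxE; field; rewrite gt_eqF.
rewrite hilbert_distE //.
apply: (congr1 (fun t => ln t / 2)).
rewrite E1 E2.
have F1 : y - q = (sg + s * (1 - sg)) *: w.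
  rewrite (_ : y - q = (y - x) - (q - x)); last by apply/rowP => i; rewrite !mxE; ring.
  by rewrite yxE qxE; apply/rowP => i; rewrite !mxE; ring.
have F2 : x - q = sg *: w by rewrite -opprB qxE scaleNr opprK.
have F3 : x - p = (- (1 - sg)) *: w by rewrite -opprB pxE scaleNr.
have F4 : y - p = (- ((1 - s) * (1 - sg))) *: w.
  rewrite (_ : y - p = (y - x) - (p - x)); last by apply/rowP => i; rewrite !mxE; ring.
  by rewrite yxE pxE; apply/rowP => i; rewrite !mxE; ring.
rewrite F1 F2 F3 F4 !enormZ !normrN.
have e0 := enorm_gt0 w0.
have s1' : 0 < 1 - s by rewrite subr_gt0.
rewrite !ger0_norm.
- by field; rewrite !gt_eqF.
- by apply: mulr_ge0; exact: ltW.
- exact: ltW.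
- exact: ltW.
- by apply: addr_ge0; [exact: ltW | apply: mulr_ge0; exact: ltW].
Qed.

Lemma dot_line (x a1 q p : 'rV[R]_n) (sg : R) : 1 + dot a1 (q - x) = 0 -> 0 < sg ->
  x = (1 - sg) *: q + sg *: p -> dot a1 (p - x) = (1 - sg) / sg.
Proof.
move=> zq sg0 xE.
have pxE : p - x = (1 - sg) *: (p - q) by rewrite xE; apply/rowP => i; rewrite !mxE; ring.
have qxE : q - x = (- sg) *: (p - q) by rewrite xE; apply/rowP => i; rewrite !mxE; ring.
move: zq; rewrite qxE pxE !dotZr => zq.
have -> : dot a1 (p - q) = sg^-1.
  apply: (@mulfI _ sg); first by rewrite gt_eqF.
  rewrite mulfV ?gt_eqF //; lra.
by rewrite mulrC.
Qed.

Lemma line_lb K G x a1 a2 q p (sg s : R) g : compact K -> convex_set_rV K -> interior K x ->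
  (forall k, K k -> 0 <= 1 + dot a1 (k - x)) ->
  (forall k, K k -> 0 <= 1 + dot a2 (k - x)) ->
  (forall g, G g -> dot (a1 - a2) (g - x) <= 0) -> G `<=` interior K ->
  K p -> 1 + dot a1 (q - x) = 0 -> 1 + dot a2 (p - x) = 0 ->
  0 < sg -> x = (1 - sg) *: q + sg *: p -> 0 < s -> s < 1 -> G g ->
  ln ((1 + s * ((1 - sg) / sg)) / (1 - s)) / 2 <= hilbert_dist K (x + s *: (p - x)) g.
Proof.
move=> cpK cK ix l1 l2 l3 GK Kp zq zp sg0 xE s0 s1 Gg.
set z := x + s *: (p - x).
have iz : interior K z by apply: interior_convex2 => //; exact: ltW.
have ig := GK g Gg.
have H := @hilbert_lb R n K a1 (1 - dot a1 x) a2 (1 - dot a2 x) z g cpK cK iz ig.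
rewrite !affE in H.
have p1z := pos_interior l1 iz; have p1g := pos_interior l1 ig.
have p2z := pos_interior l2 iz; have p2g := pos_interior l2 ig.
have l1' : forall k, K k -> 0 <= aff a1 (1 - dot a1 x) k by move=> k Kk; rewrite affE; exact: l1.
have l2' : forall k, K k -> 0 <= aff a2 (1 - dot a2 x) k by move=> k Kk; rewrite affE; exact: l2.
have {}H := H l1' l2' p1z p1g p2z p2g.
have dz1 : 1 + dot a1 (z - x) = 1 + s * ((1 - sg) / sg).
  by rewrite /z (addrC x) addrK dotZr (dot_line zq sg0 xE).
have dz2 : 1 + dot a2 (z - x) = 1 - s.
  rewrite /z (addrC x) addrK dotZr.
  have -> : dot a2 (p - x) = -1 by lra.
  by rewrite mulrN1.
have lg : 1 + dot a1 (g - x) <= 1 + dot a2 (g - x).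
  by have := l3 g Gg; rewrite dotBl; lra.
set A := 1 + s * ((1 - sg) / sg).
have A0 : 0 < A by rewrite /A -dz1.
have s1' : 0 < 1 - s by rewrite subr_gt0.
apply: le_trans H; apply: ln_half_mono; first by rewrite divr_gt0.
rewrite dz1 dz2.
apply: ler_divdiv => //; first by rewrite mulr_gt0.
rewrite -!mulrA; apply: ler_wpM2l; first exact: ltW.
have := lg; nra.
Qed.


End H.

Lemma ltr_divdiv (R : realType) (p q a b : R) : 0 < q -> 0 < b -> p * b < a * q -> p / q < a / b.
Proof. by move=> q0 b0 H; rewrite ltr_pdivrMr // mulrAC ltr_pdivlMr. Qed.

Unset Implicit Arguments.
Set Strict Implicit.

Theorem lemma8p4 (R : realType) (d : nat) (K G : set 'rV[R]_d) (alpha : R) :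
  convex_body K -> convex_body G -> G `<=` interior K ->
  0 < alpha -> alpha <= 1 ->
  (forall x, bd G x -> exists y, bd (Gplus K G alpha) y /\ hilbert_dist K x y = alpha)
  /\ bd G `<=` [set z | inf [set hilbert_dist K z w | w in bd (Gplus K G alpha)] <= alpha].
Proof.
move=> bK bG GK a0 a1.
have [cpK cK _] := bK.
have part1 : forall x, bd G x -> exists y, bd (Gplus K G alpha) y /\ hilbert_dist K x y = alpha.
  move=> x bdx.
  have [cpG cvG [c ic]] := bG.
  have clG := compact_closedK cpG.
  have [Gx nix] := proj1 (bd_closedE _ clG) bdx.
  have ixK := GK x Gx.
  have [h [h0 Hh]] := supp_hyp bG bdx.
  have hc : dot h (c - x) < 0.
    have [rc rc0 Hrc] := proj1 (interiorP _ _) ic.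
    have hn : 0 < `|h| by rewrite normr_gt0.
    pose s := rc / (2 * `|h|).
    have s0 : 0 < s by rewrite divr_gt0 // mulr_gt0.
    have Gy : G (c + s *: h).
      apply: Hrc; rewrite (addrC c) addrK normrZ gtr0_norm // /s.
      have -> : rc / (2 * `|h|) * `|h| = rc / 2 by field; rewrite gt_eqF.
      lra.
    have := Hh _ Gy.
    have -> : c + s *: h - x = (c - x) + s *: h by apply/rowP => i; rewrite !mxE; ring.
    rewrite dotDr dotZr; have := dot_gt0 h0; nra.
  have [a1' [a2' [q [p [sg [l1 l2 l3 [[Kq zq] [Kp zp]] [/andP [sg0 sg1] xE]]]]]]] :=
    lp_main cpK cK ixK Hh hc.
  pose ka := (1 - sg) / sg.
  have ka0 : 0 < ka by rewrite divr_gt0 // subr_gt0.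
  pose E := expR (2 * alpha).
  have E1 : 1 < E by rewrite expR_gt1 mulr_gt0.
  have Eka : 0 < E + ka by lra.
  pose sy := (E - 1) / (E + ka).
  have sy0 : 0 < sy by rewrite divr_gt0 // subr_gt0.
  have sy1 : sy < 1 by rewrite ltr_pdivrMr // mul1r; lra.
  have rE : (1 + sy * ka) / (1 - sy) = E.
    rewrite /sy; field; rewrite !gt_eqF //.
    have -> : E + ka - (E - 1) = ka + 1 by ring.
    lra.
  set y := x + sy *: (p - x).
  have hxy : hilbert_dist K x y = alpha.
    rewrite (line_dist cpK cK ixK l1 l2 Kq zq Kp zp sg0 sg1 xE sy0 sy1).
    transitivity (ln E / 2); first exact: (congr1 (fun t => ln t / 2) rE).
    by rewrite /E expRK; field.
  exists y; split => //.
  have iy : interior K y by apply: interior_convex2 => //; exact: ltW.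
  have lbG : forall s g, 0 < s -> s < 1 -> G g ->
      ln ((1 + s * ka) / (1 - s)) / 2 <= hilbert_dist K (x + s *: (p - x)) g.
    move=> s g s0 s1 Gg.
    exact: (line_lb cpK cK ixK l1 l2 l3 GK Kp zq zp sg0 xE s0 s1 Gg).
  have Gpy : Gplus K G alpha y.
    split; first exact: iy.
    have hl : has_lbound [set hilbert_dist K y g | g in G].
      exists 0 => _ [g Gg <-]; exact: (hd_ge0 cpK cK iy (GK g Gg)).
    apply: (ge_inf hl); exists x; first exact: Gx.
    rewrite hilbert_dist_sym; exact: hxy.
  split; first exact: subset_closure Gpy.
  move=> /interiorP [rho rho0 Hrho].
  set L := `|p - x|.
  have L0 : 0 <= L by apply: normr_ge0.
  pose del := Num.min ((1 - sy) / 2) (rho / (2 * (L + 1))).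
  have del0 : 0 < del by rewrite lt_min !divr_gt0 // ?subr_gt0 // mulr_gt0 // ltr_wpDl.
  have del1 : del <= (1 - sy) / 2 by rewrite ge_min lexx.
  have del2 : del <= rho / (2 * (L + 1)) by rewrite ge_min lexx orbT.
  pose s' := sy + del.
  have s'0 : 0 < s' by rewrite addr_gt0.
  have s'1 : s' < 1 by rewrite /s'; lra.
  have Gz : Gplus K G alpha (x + s' *: (p - x)).
    apply: Hrho.
    have -> : x + s' *: (p - x) - y = del *: (p - x).
      by rewrite /y /s'; apply/rowP => i; rewrite !mxE; ring.
    rewrite normrZ gtr0_norm // -/L.
    have : del * L <= rho / (2 * (L + 1)) * L by apply: ler_wpM2r.
    have -> : rho / (2 * (L + 1)) * L = rho / 2 * (L / (L + 1)).
      by field; rewrite gt_eqF // ltr_wpDl.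
    have : L / (L + 1) < 1 by rewrite ltr_pdivrMr ?ltr_wpDl // mul1r ltrDl.
    have : 0 < rho / 2 by rewrite divr_gt0.
    nra.
  have [_ Hinf] := Gz.
  have lb : ln ((1 + s' * ka) / (1 - s')) / 2 <=
      inf [set hilbert_dist K (x + s' *: (p - x)) g | g in G].
    apply: lb_le_inf; first by exists (hilbert_dist K (x + s' *: (p - x)) x); exists x.
    move=> _ [g Gg <-]; exact: lbG.
  have : alpha < ln ((1 + s' * ka) / (1 - s')) / 2.
    have -> : alpha = ln E / 2 by rewrite /E expRK; field.
    rewrite ltr_pM2r // ltr_ln ?posrE; last 2 first.
    - by rewrite /E expR_gt0.
    - by rewrite divr_gt0 ?subr_gt0 // addr_gt0 // mulr_gt0.
    rewrite -rE; apply: ltr_divdiv; rewrite ?subr_gt0 //.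
    rewrite /s'; nra.
  lra.
split; first exact: part1.
move=> z bdz /=.
have [y [bdy hzy]] := part1 z bdz.
case: (pselect (has_lbound [set hilbert_dist K z w | w in bd (Gplus K G alpha)])) => hl.
  apply: (ge_inf hl); exists y; first exact: bdy.
  exact: hzy.
rewrite inf_out; first exact: ltW.
by move=> [_ hl'].
Qed.
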